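(* Let $\pi$ be the policy induced by Dual Gradient Descent with Proxy Assignments with stepsize $\eta=\Theta(\sqrt{K/T})$. Then for every $k\in[K]$, $\mathbb E\big[\widetilde{\textsc{Reg}}_k[\omega_k]\big]=O(\sqrt{T/K})$.
   Context: Model. There are $m$ resources and $n$ arrival types; type $j$ has cost vector $c_j\in\mathbb R^m$ and allowed resources $\mathcal S_j\subseteq[m]$, $\max_{i,j}|c_{ji}|<\infty$. The horizon has $T$ periods partitioned into $K=\Theta(1)$ epochs ($T$ a multiple of $K$), epoch $k$ being $\mathcal T_k=\{(k-1)T/K+1,\dots,kT/K\}$. In period $t$ one arrival of type $j^t$ occurs, $j^1,\dots,j^T$ i.i.d. with $\mathbb P(j^t=j)=p_j$, $p$ not depending on $T$ and unknown to the decision-maker; $\omega_k=(j^t)_{t\in\mathcal T_k}$, $\Lambda_j(t_1:t_2)=\sum_{t_1<\tau\le t_2}\mathbf 1\{j^\tau=j\}$. Feasible decisions: $\mathcal X^t=\{x\in\{0,1\}^m:\sum_ix_i\le1,\ x_i=0\ \forall i\notin\mathcal S_{j^t}\}$. $Z^\pi_{ji}(t)$ counts type-$j$ arrivals assigned to $i$ in periods $1..t$. Each epoch $k$ and resource $i$ has a target $\rho_{ki}\in[0,1]$ and convex $L$-Lipschitz $g_{ki}:[0,1]\to\mathbb R_{\ge0}$ with $g_{ki}(\rho_{ki})=0$. Expectations over arrivals and algorithm decisions; $O(\cdot)$ as $T\to\infty$. Dual Gradient Descent with Proxy Assignments (stepsize $\eta$, initial $\mu^1\in\mathbb R^{K\times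 m}$): for $t=1,\dots,T$, with $k$ the epoch of $t$: if $t=(k-1)T/K+1$ set $\mu^t_{k'}=\mu^1_{k'}$ for $k'\ge k$; observe $j=j^t$; for every $k'\ge k$ compute $\tilde x^t_{k'}\in\arg\min_{x\in\mathcal X^t}\sum_ix_i(c_{ji}-\mu^t_{k'i})$; implement $x^t=\tilde x^t_k$; compute $a^t\in\arg\min_{a\in[0,1]^{(K+1-k)\times m}}\sum_{k'\ge k}k'\sum_ig_{k'i}\big(\frac{\sum_{t'\le(k-1)T/K}x^{t'}_i}{k'T/K}+\sum_{k''=k}^{k'}\frac{a_{k''i}}{k'}\big)+\sum_{k'\ge k}\sum_i\mu^t_{k'i}a_{k'i}$; update $\mu^{t+1}_{k'}=\mu^t_{k'}+\eta(a^t_{k'}-\tilde x^t_{k'})$ for $k'\ge k$. Proxy quantities. For $k\le k_1\le k_2\le K$: $\widetilde Z^\pi_{ji,k}\big(\frac{(k_1-1)T}K:\frac{k_2T}K\big)=\sum_{t\in\mathcal T_k}\sum_{k''=k_1}^{k_2}\tilde x^t_{k''i}\mathbf 1\{j^t=j\}$, $\widetilde Z^\pi_{i,k}=\sum_j\widetilde Z^\pi_{ji,k}$. Cumulative proxy cost: $\widetilde V^\pi_k[\omega_k\mid z]=\sum_{j,i}c_{ji}\widetilde Z^\pi_{ji,k}\big(\frac{(k-1)T}K:T\big)+\frac TK\sum_{k'\ge k}\sum_ik'g_{k'i}\Big(\frac{z_i+\widetilde Z^\pi_{i,k}((k-1)T/K:k'T/K)}{k'T/K}\Big)$. Proxy offline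 optimum $\widetilde V^{\textsc{off}}_k[\omega_k\mid z]$: the minimum over nonnegative integers $Z^{(k')}_{ji}$ ($k'\ge k$), zero for $i\notin\mathcal S_j$, with $\sum_iZ^{(k')}_{ji}\le\Lambda_j\big(\frac{(k-1)T}K:\frac{kT}K\big)$ for all $j,k'\ge k$, of $\sum_{j,i}c_{ji}\sum_{k'\ge k}Z^{(k')}_{ji}+\frac TK\sum_{k'\ge k}\sum_ik'g_{k'i}\Big(\frac{z_i+\sum_j\sum_{k''=k}^{k'}Z^{(k'')}_{ji}}{k'T/K}\Big)$. Proxy regret: $\widetilde{\textsc{Reg}}_k[\omega_k]=\widetilde V^\pi_k[\omega_k\mid Z^\pi((k-1)T/K)]-\widetilde V^{\textsc{off}}_k[\omega_k\mid Z^\pi((k-1)T/K)]$ (with $Z^\pi(0)=0$). *)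

(* Defs.v *)
From HB Require Import structures.
From mathcomp Require Import all_boot all_order all_algebra.
From mathcomp Require Import reals.

Set Implicit Arguments.
Unset Strict Implicit.
Unset Printing Implicit Defensive.

Import Order.TTheory GRing.Theory Num.Theory.
Local Open Scope ring_scope.

(* Conventions (0-based):
   - resources 'I_m, arrival types 'I_n, epochs 'I_K; the paper's epoch
     k (1-based) is our k : 'I_K with k.+1 = paper k.
   - T = K * N, N = T/K periods per epoch; periods t = 0 .. T-1 (paper t+1);
     epoch of t is t %/ N; epoch k consists of periods k*N <= t < k.+1*N.
   - a decision x in X^t (0/1 vector, at most one 1, supported on S_j) is
     encoded as o : option 'I_m (None = reject, Some i = assign to i),
     with 0/1 vector xvec o. *)

Section Model.
Variable R : realType.
Variables (m n K N : nat).
Variable c : 'I_n -> 'I_m -> R.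
Variable S : 'I_n -> {set 'I_m}.
Variable g : 'I_K -> 'I_m -> R -> R.

Definition xvec (o : option 'I_m) : 'I_m -> R :=
  fun i => if o == Some i then 1 else 0.

(* o encodes an element of X^t when j^t = j *)
Definition allowed (j : 'I_n) (o : option 'I_m) : bool :=
  if o is Some i then i \in S j else true.

Definition dec_cost (j : 'I_n) (mu : 'I_m -> R) (o : option 'I_m) : R :=
  \sum_(i < m) xvec o i * (c j i - mu i).

Definition is_xsel
  (selX : nat -> 'I_K -> 'I_n -> ('I_m -> R) -> option 'I_m) : Prop :=
  forall t k' j mu, allowed j (selX t k' j mu) /\
    forall o, allowed j o -> dec_cost j mu (selX t k' j mu) <= dec_cost j mu o.

(* objective defining a^t in epoch k, given z = sum_{t' <= (k-1)T/K} x^{t'} *)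
Definition aobj (k : nat) (z : 'I_m -> R) (mu a : 'I_K -> 'I_m -> R) : R :=
  \sum_(k' : 'I_K | (k <= k')%N)
     (k'.+1)%:R * \sum_(i < m)
        g k' i (z i / (k'.+1 * N)%N%:R
                + \sum_(k'' : 'I_K | ((k <= k'') && (k'' <= k'))%N) a k'' i / (k'.+1)%:R)
  + \sum_(k' : 'I_K | (k <= k')%N) \sum_(i < m) mu k' i * a k' i.

Definition in_box (k : nat) (a : 'I_K -> 'I_m -> R) : Prop :=
  forall (k' : 'I_K) (i : 'I_m), (k <= k')%N -> 0 <= a k' i <= 1.

(* selA t k z mu : an element a^t of the argmin over [0,1]^{(K+1-k) x m}
   (only the coordinates k' >= k are meaningful).  Required for every
   usage vector z that can occur (0 <= z_i <= k*N). *)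
Definition is_asel
  (selA : nat -> nat -> ('I_m -> R) -> ('I_K -> 'I_m -> R) -> ('I_K -> 'I_m -> R))
  : Prop :=
  forall t k z mu, (forall i, 0 <= z i <= (k * N)%N%:R) ->
    in_box k (selA t k z mu) /\
    forall a, in_box k a -> aobj k z mu (selA t k z mu) <= aobj k z mu a.

Variable eta : R.
Variable mu1 : 'I_K -> 'I_m -> R.
Variable selX : nat -> 'I_K -> 'I_n -> ('I_m -> R) -> option 'I_m.
Variable selA : nat -> nat -> ('I_m -> R) -> ('I_K -> 'I_m -> R) -> ('I_K -> 'I_m -> R).
Variable w : {ffun 'I_(K * N) -> 'I_n}.

Definition arrv (t : nat) : option 'I_n := omap w (insub t).

(* algorithm state before period t:
   dual variables mu, cumulative actual usage U, usage at start of current epoch Z0 *)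
Record st := St { smu : 'I_K -> 'I_m -> R; sU : 'I_m -> R; sZ0 : 'I_m -> R }.

Definition reset (t : nat) (s : st) : st :=
  if (t %% N == 0)%N then
    St (fun k' i => if (t %/ N <= k')%N then mu1 k' i else smu s k' i) (sU s) (sU s)
  else s.

Definition xsel (t : nat) (s : st) (k' : 'I_K) : option 'I_m :=
  if arrv t is Some j then selX t k' j (smu s k') else None.

Definition step (t : nat) (s : st) : st :=
  let s' := reset t s in
  let e := (t %/ N)%N in
  let a := selA t e (sZ0 s') (smu s') in
  St (fun k' i => if (e <= k')%N then smu s' k' i + eta * (a k' i - xvec (xsel t s' k') i)
                  else smu s' k' i)
     (fun i => sU s' i + \sum_(k' : 'I_K | nat_of_ord k' == e) xvec (xsel t s' k') i)
     (sZ0 s').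

Fixpoint run (t : nat) : st :=
  if t is t'.+1 then step t' (run t') else St mu1 (fun=> 0) (fun=> 0).

Definition xt (t : nat) (k' : 'I_K) : option 'I_m := xsel t (reset t (run t)) k'.

Definition Zbefore (k : nat) : 'I_m -> R := sU (run (k * N)).

Definition ZtilJ (k : nat) (j : 'I_n) (i : 'I_m) : R :=
  \sum_(k * N <= t < k.+1 * N)
     \sum_(k'' : 'I_K | (k <= k'')%N) xvec (xt t k'') i * (arrv t == Some j)%:R.

Definition Ztil (k : nat) (k' : 'I_K) (i : 'I_m) : R :=
  \sum_(j < n) \sum_(k * N <= t < k.+1 * N)
     \sum_(k'' : 'I_K | ((k <= k'') && (k'' <= k'))%N) xvec (xt t k'') i * (arrv t == Some j)%:R.

Definition Vpi (k : nat) (z : 'I_m -> R) : R :=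
  \sum_(j < n) \sum_(i < m) c j i * ZtilJ k j i
  + N%:R * \sum_(k' : 'I_K | (k <= k')%N) \sum_(i < m)
        (k'.+1)%:R * g k' i ((z i + Ztil k k' i) / (k'.+1 * N)%N%:R).

Definition Lam (k : nat) (j : 'I_n) : nat :=
  (\sum_(k * N <= t < k.+1 * N) (arrv t == Some j))%N.

(* offline candidates Z^{(k')}_{ji}; values are nonnegative integers, bounded
   by N (as forced by the constraints sum_i Z <= Lambda_j <= N) *)
Definition offobj (k : nat) (z : 'I_m -> R) (Z : {ffun 'I_K * 'I_n * 'I_m -> 'I_N.+1}) : R :=
  \sum_(j < n) \sum_(i < m) c j i * \sum_(k' : 'I_K | (k <= k')%N) (Z (k', j, i) : nat)%:R
  + N%:R * \sum_(k' : 'I_K | (k <= k')%N) \sum_(i < m)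
      (k'.+1)%:R * g k' i ((z i + \sum_(j < n) \sum_(k'' : 'I_K | ((k <= k'') && (k'' <= k'))%N)
                                      (Z (k'', j, i) : nat)%:R) / (k'.+1 * N)%N%:R).

Definition off_feasible (k : nat) (Z : {ffun 'I_K * 'I_n * 'I_m -> 'I_N.+1}) : bool :=
  [forall k' : 'I_K, (k <= k')%N ==>
     [forall j : 'I_n, [forall i : 'I_m, (i \notin S j) ==> (Z (k', j, i) == 0 :> nat)]
        && (\sum_(i < m) (Z (k', j, i) : nat) <= Lam k j)%N]].

(* minimum over feasible Z (Z = 0 is always feasible) *)
Definition Voff (k : nat) (z : 'I_m -> R) : R :=
  \big[Num.min/offobj k z [ffun=> ord0]]_(Z | off_feasible k Z) offobj k z Z.

Definition proxy_reg (k : nat) : R := Vpi k (Zbefore k) - Voff k (Zbefore k).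

End Model.

Definition exp_proxy_reg (R : realType) (m n K N : nat) (c : 'I_n -> 'I_m -> R)
  (S : 'I_n -> {set 'I_m}) (g : 'I_K -> 'I_m -> R -> R) (p : 'I_n -> R)
  (eta : R) (mu1 : 'I_K -> 'I_m -> R)
  (selX : nat -> 'I_K -> 'I_n -> ('I_m -> R) -> option 'I_m)
  (selA : nat -> nat -> ('I_m -> R) -> ('I_K -> 'I_m -> R) -> ('I_K -> 'I_m -> R))
  (k : nat) : R :=
  \sum_(w : {ffun 'I_(K * N) -> 'I_n})
     (\prod_(t : 'I_(K * N)) p (w t)) * proxy_reg c S g eta mu1 selX selA w k.

(* Main.v *)
Require Import Defs.
From HB Require Import structures.
From mathcomp Require Import all_boot all_order all_algebra.
From mathcomp Require Import reals.
From mathcomp Require Import ring lra zify.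
Set Implicit Arguments. Unset Strict Implicit. Unset Printing Implicit Defensive.
Import Order.TTheory GRing.Theory Num.Theory.
Local Open Scope ring_scope.


Section Gen.
Variable R : realType.

Lemma jensen (f : R -> R) :
  (forall x y l : R, 0 <= x <= 1 -> 0 <= y <= 1 -> 0 <= l <= 1 ->
     f (l * x + (1 - l) * y) <= l * f x + (1 - l) * f y) ->
  forall n (y : nat -> R), (forall s, (s < n)%N -> 0 <= y s <= 1) ->
  n%:R * f ((\sum_(s < n) y s) / n%:R) <= \sum_(s < n) f (y s).
Proof.
move=> cvx; elim=> [|n IH] y hy; first by rewrite !big_ord0 mul0r.
rewrite big_ord_recr /= big_ord_recr /=.
set A := \sum_(s < n) y s.
have hA : 0 <= A <= n%:R.
  rewrite /A; apply/andP; split; first by apply: sumr_ge0 => i _; case/andP: (hy i (ltnW (ltn_ord i))).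
  apply: (@le_trans _ _ (\sum_(i < n) (1:R))); last by rewrite sumr_const card_ord.
  by apply: ler_sum => i _; case/andP: (hy i (ltnW (ltn_ord i))).
have hyn := hy n (ltnSn n).
have IHn := IH y (fun s hs => hy s (ltnW hs)).
rewrite -/A in IHn.
case: (posnP n) => [n0|npos].
  subst n; rewrite /A big_ord0 add0r mul1r divr1.
  by rewrite mul0r in IHn; lra.
pose l : R := n%:R / (n.+1)%:R.
have hn : 0 < n%:R :> R by rewrite ltr0n.
have hn1 : 0 < (n.+1)%:R :> R by rewrite ltr0n.
have havg : 0 <= A / n%:R <= 1.
  apply/andP; split; first by apply: divr_ge0; lra.
  by rewrite ler_pdivrMr // mul1r; lra.
have hl : 0 <= l <= 1.
  apply/andP; split; first by apply: divr_ge0; lra.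
  by rewrite ler_pdivrMr // mul1r ler_nat.
have eq1 : (A + y n) / (n.+1)%:R = l * (A / n%:R) + (1 - l) * y n.
  rewrite /l -natr1. field. rewrite natr1. by apply/andP; split; apply: lt0r_neq0.
rewrite eq1.
have := cvx _ _ _ havg hyn hl.
move=> H.
have e2 : (n.+1)%:R * (l * f (A / n%:R) + (1 - l) * f (y n)) = n%:R * f (A / n%:R) + f (y n).
  rewrite /l -natr1; field. by rewrite natr1 lt0r_neq0.
have : (n.+1)%:R * f (l * (A / n%:R) + (1 - l) * y n) <= (n.+1)%:R * (l * f (A / n%:R) + (1 - l) * f (y n)).
  by rewrite ler_pM2l.
rewrite e2; lra.
Qed.

Lemma telesc_id (eta nu : R) (u G : nat -> R) N :
  (forall s, (s < N)%N -> u s.+1 = u s + eta * G s) ->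
  2 * eta * \sum_(s < N) (u s - nu) * G s + eta ^+ 2 * \sum_(s < N) G s ^+ 2
  = (u N - nu) ^+ 2 - (u 0%N - nu) ^+ 2.
Proof.
elim: N => [|N IH] hu; first by rewrite !big_ord0; ring.
have e := IH (fun s hs => hu s (ltnW hs)).
rewrite !big_ord_recr /= hu //.
lra.
Qed.

Lemma telesc_bound (eta M : R) (u G : nat -> R) N :
  0 < eta -> 0 <= M ->
  (forall s, (s < N)%N -> u s.+1 = u s + eta * G s) ->
  (forall s, (s < N)%N -> -1 <= G s <= 1) ->
  M * `|\sum_(s < N) G s| - \sum_(s < N) u s * G s
    <= (u 0%N ^+ 2 + M ^+ 2) / eta + eta * N%:R / 2.
Proof.
move=> he hM hu hG.
have hG2 : \sum_(s < N) G s ^+ 2 <= N%:R.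
  apply: (@le_trans _ _ (\sum_(i < N) (1:R))); last by rewrite sumr_const card_ord.
  apply: ler_sum => i _.
  have := hG i (ltn_ord i); move=> /andP[h1 h2]; nra.
have hG20 : 0 <= \sum_(s < N) G s ^+ 2 by apply: sumr_ge0 => i _; exact: sqr_ge0.
set SG := \sum_(s < N) G s.
pose nu := if 0 <= SG then M else - M.
have hnu : M * `|SG| = nu * SG.
  rewrite /nu; case: ifP => h; first by rewrite ger0_norm.
  by rewrite ltr0_norm ?mulrN ?mulNr // ltNge h.
have hnu2 : nu ^+ 2 = M ^+ 2 by rewrite /nu; case: ifP => _; ring.
have id := telesc_id nu hu.
have split : \sum_(s < N) (u s - nu) * G s = \sum_(s < N) u s * G s - nu * SG.
  rewrite /SG mulr_sumr -sumrB; apply: eq_bigr => i _; ring.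
rewrite split in id.
have hsq : 0 <= (u N - nu) ^+ 2 by exact: sqr_ge0.
have key : 2 * eta * (nu * SG - \sum_(s < N) u s * G s) <= (u 0%N - nu) ^+ 2 + eta ^+ 2 * N%:R.
  have : eta ^+ 2 * \sum_(s < N) G s ^+ 2 <= eta ^+ 2 * N%:R by rewrite ler_pM2l // exprn_gt0.
  lra.
have hq : (u 0%N - nu) ^+ 2 <= 2 * (u 0%N ^+ 2 + M ^+ 2).
  rewrite -hnu2; have := sqr_ge0 (u 0%N + nu); lra.
rewrite hnu.
have he2 : 0 < 2 * eta by lra.
rewrite -(ler_pM2l he2).
have -> : 2 * eta * ((u 0%N ^+ 2 + M ^+ 2) / eta + eta * N%:R / 2) = 2 * (u 0%N ^+ 2 + M ^+ 2) + eta ^+ 2 * N%:R.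
  by field; rewrite lt0r_neq0.
lra.
Qed.

End Gen.


Section Prob.
Variables (R : realType) (T n : nat) (p : 'I_n -> R).
Hypothesis hp : \sum_(j < n) p j = 1.

Definition upd (w : {ffun 'I_T -> 'I_n}) (t0 : 'I_T) (j : 'I_n) : {ffun 'I_T -> 'I_n} :=
  [ffun s => if s == t0 then j else w s].

Definition Pw (w : {ffun 'I_T -> 'I_n}) : R := \prod_(t < T) p (w t).

Lemma Pw_split w t0 : Pw w = p (w t0) * \prod_(t < T | t != t0) p (w t).
Proof. by rewrite /Pw (bigD1 t0). Qed.

Lemma Pw_upd w t0 j : Pw (upd w t0 j) * p (w t0) = Pw w * p j.
Proof.
rewrite !(Pw_split _ t0) /upd ffunE eqxx.
rewrite (eq_bigr (fun t => p (w t))); last by move=> t ht; rewrite ffunE (negbTE ht).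
ring.
Qed.

Lemma upd_invol w t0 j : upd (upd w t0 j) t0 (w t0) = w.
Proof. by apply/ffunP => s; rewrite /upd !ffunE; case: eqVneq => [->|]. Qed.

Lemma upd_at w t0 j : upd w t0 j t0 = j.
Proof. by rewrite /upd ffunE eqxx. Qed.

Lemma sumPw : \sum_(w : {ffun 'I_T -> 'I_n}) Pw w = 1.
Proof.
rewrite /Pw -(bigA_distr_bigA (fun (t : 'I_T) (j : 'I_n) => p j)) /=.
transitivity (\prod_(t < T) (1:R)); first by apply: eq_bigr => t _; exact: hp.
by rewrite big1.
Qed.

Lemma Pw_ge0 w : (forall j, 0 <= p j) -> 0 <= Pw w.
Proof. by move=> h; rewrite /Pw; apply: prodr_ge0 => t _. Qed.

Lemma indep (F : {ffun 'I_T -> 'I_n} -> 'I_n -> R) (t0 : 'I_T) :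
  (forall w j j', F (upd w t0 j') j = F w j) ->
  \sum_w Pw w * F w (w t0) = \sum_w Pw w * \sum_(j < n) p j * F w j.
Proof.
move=> hF.
pose G (x : {ffun 'I_T -> 'I_n} * 'I_n) := Pw x.1 * p x.2 * F x.1 (x.1 t0).
pose phi (x : {ffun 'I_T -> 'I_n} * 'I_n) := (upd x.1 t0 x.2, x.1 t0).
have phi_inj : injective phi.
  move=> [w1 j1] [w2 j2] /= [e1 e2].
  have := congr1 (fun w : {ffun 'I_T -> 'I_n} => upd w t0 (w1 t0)) e1.
  rewrite upd_invol e2 upd_invol => ->.
  by have := congr1 (fun w : {ffun 'I_T -> 'I_n} => w t0) e1; rewrite !upd_at => ->.
transitivity (\sum_x G x).
  rewrite -(pair_bigA _ (fun w j => G (w, j))) /=; apply: eq_bigr => w _.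
  by rewrite -[LHS]mulr1 -hp mulr_sumr; apply: eq_bigr => j _; rewrite /G /=; ring.
rewrite (reindex_inj phi_inj) -(pair_bigA _ (fun w j => G (phi (w, j)))) /=; apply: eq_bigr => w _.
rewrite mulr_sumr; apply: eq_bigr => j _.
rewrite /G /= upd_at hF.
have := Pw_upd w t0 j; rewrite mulrC => ->.
ring.
Qed.
End Prob.


Lemma cnt_nat K0 k k' :
  (\sum_(i < K0 | (k <= i) && (i <= k')) 1 <= minn K0 k'.+1 - k)%N.
Proof.
elim: K0 => [|K0 IH]; first by rewrite big_ord0.
rewrite big_mkcond big_ord_recr /= -big_mkcond /=.
set X := (\sum_(i < K0 | _) _)%N.
have hX : (X <= minn K0 k'.+1 - k)%N by [].
clearbody X.
case: ifP => /= h; last by lia.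
by case/andP: h; lia.
Qed.

Lemma cnt_R (R : realType) K (F : 'I_K -> R) (k k' : nat) :
  (forall x : 'I_K, (k <= x)%N -> 0 <= F x <= 1) ->
  \sum_(x : 'I_K | ((k <= x) && (x <= k'))%N) F x <= (k'.+1 - k)%:R.
Proof.
move=> hF.
apply: (@le_trans _ _ (\sum_(x : 'I_K | ((k <= x) && (x <= k'))%N) (1%N)%:R)).
  by apply: ler_sum => x /andP[hx _]; case/andP: (hF x hx).
rewrite -natr_sum ler_nat.
apply: leq_trans (cnt_nat K k k') _; lia.
Qed.

Lemma epoch_sum (R : realType) k N (F : nat -> R) :
  \sum_(k * N <= t < k.+1 * N) F t = \sum_(s < N) F (k * N + s)%N.
Proof.
rewrite -{1}[(k * N)%N]add0n big_addn mulSn addnK big_mkord.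
by apply: eq_bigr => s _; rewrite addnC.
Qed.

Lemma sum_ind (R : realType) n (F : 'I_n -> R) (oj : option 'I_n) :
  \sum_(j < n) F j * (oj == Some j)%:R = if oj is Some j0 then F j0 else 0.
Proof.
case: oj => [j0|]; last by rewrite big1 // => j _; rewrite mulr0.
rewrite (bigD1 j0) //= eqxx mulr1 big1 ?addr0 // => j hj.
by rewrite (inj_eq (@Some_inj _)) eq_sym (negbTE hj) mulr0.
Qed.

Lemma arrv_ord n K N (w : {ffun 'I_(K * N) -> 'I_n}) (t : 'I_(K * N)) :
  arrv w t = Some (w t).
Proof. by rewrite /arrv valK. Qed.

Lemma arrv_some n K N (w : {ffun 'I_(K * N) -> 'I_n}) t :
  (t < K * N)%N -> exists j, arrv w t = Some j.
Proof. by move=> h; exists (w (Ordinal h)); rewrite -(arrv_ord w (Ordinal h)). Qed.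


Section Dyn.
Variables (R : realType) (m n K N : nat).
Variable c : 'I_n -> 'I_m -> R.
Variable S : 'I_n -> {set 'I_m}.
Variable g : 'I_K -> 'I_m -> R -> R.
Variable eta : R.
Variable mu1 : 'I_K -> 'I_m -> R.
Variable selX : nat -> 'I_K -> 'I_n -> ('I_m -> R) -> option 'I_m.
Variable selA : nat -> nat -> ('I_m -> R) -> ('I_K -> 'I_m -> R) -> ('I_K -> 'I_m -> R).

Local Notation runw w t := (run eta mu1 selX selA w t).
Local Notation resetN := (@reset R m K N mu1).

Lemma step_ext (w w' : {ffun 'I_(K * N) -> 'I_n}) t s :
  arrv w t = arrv w' t -> step eta mu1 selX selA w t s = step eta mu1 selX selA w' t s.
Proof. by move=> h; rewrite /step /xsel h. Qed.

Lemma run_prefix (w w' : {ffun 'I_(K * N) -> 'I_n}) t :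
  (forall s, (s < t)%N -> arrv w s = arrv w' s) -> runw w t = runw w' t.
Proof.
elim: t => [//|t IH] h /=.
rewrite IH; last by move=> s hs; apply: h; exact: ltnW.
by apply: step_ext; apply: h.
Qed.

Lemma xvec01 (o : option 'I_m) i : 0 <= xvec R o i <= 1.
Proof. by rewrite /xvec; case: ifP => _; rewrite ?lexx ?ler01. Qed.

Lemma sum_pred1_01 (F : 'I_K -> R) e :
  (forall k, 0 <= F k <= 1) -> 0 <= \sum_(k < K | nat_of_ord k == e) F k <= 1.
Proof.
move=> hF; case: (ltnP e K) => h.
  by rewrite (big_pred1 (Ordinal h)) //.
rewrite big_pred0 ?lexx ?ler01 // => k.
by apply/negbTE; rewrite neq_ltn (leq_trans (ltn_ord k) h).
Qed.

Lemma sU_bound (w : {ffun 'I_(K * N) -> 'I_n}) t i :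
  0 <= sU (runw w t) i <= t%:R.
Proof.
elim: t => [|t IH] /=; first by rewrite lexx.
have -> : sU (reset N mu1 t (runw w t)) = sU (runw w t).
  by rewrite /reset; case: ifP.
have := @sum_pred1_01 (fun k' => xvec R (xsel selX w t (reset N mu1 t (runw w t)) k') i) (t %/ N)%N
   (fun k => xvec01 _ i).
rewrite -natr1; move: IH; lra.
Qed.

Section Epoch.
Variable k : nat.
Hypothesis kK : (k < K)%N.
Hypothesis Npos : (0 < N)%N.

Lemma div_epoch s : (s < N)%N -> ((k * N + s) %/ N = k)%N.
Proof. by move=> hs; rewrite divnMDl // divn_small // addn0. Qed.

Lemma mod_epoch s : (0 < s < N)%N -> ((k * N + s) %% N != 0)%N.
Proof. by case/andP=> h1 h2; rewrite modnMDl modn_small // -lt0n. Qed.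

Lemma sZ0_epoch (w : {ffun 'I_(K * N) -> 'I_n}) s : (s < N)%N ->
  sZ0 (resetN (k * N + s) (runw w (k * N + s))) = Zbefore eta mu1 selX selA w k.
Proof.
elim: s => [|s IH] hs.
  by rewrite addn0 /reset modnMl eqxx.
rewrite /reset (negbTE (mod_epoch _)) ?hs // addnS /=.
by rewrite IH // ltnW.
Qed.

Definition useq (w : {ffun 'I_(K * N) -> 'I_n}) (k' : 'I_K) (i : 'I_m) (s : nat) : R :=
  if s is 0 then mu1 k' i else smu (runw w (k * N + s)) k' i.

Lemma mu_epoch (w : {ffun 'I_(K * N) -> 'I_n}) s (k' : 'I_K) (i : 'I_m) : (s < N)%N -> (k <= k')%N ->
  smu (resetN (k * N + s) (runw w (k * N + s))) k' i = useq w k' i s.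
Proof.
case: s => [|s] hs hk.
  by rewrite /= addn0 /reset modnMl eqxx /= mulnK // hk.
by rewrite /reset (negbTE (mod_epoch _)) ?hs.
Qed.

Lemma u_step (w : {ffun 'I_(K * N) -> 'I_n}) s (k' : 'I_K) (i : 'I_m) : (s < N)%N -> (k <= k')%N ->
  let t := (k * N + s)%N in
  let st := resetN t (runw w t) in
  useq w k' i s.+1 = useq w k' i s
     + eta * (selA t k (Zbefore eta mu1 selX selA w k) (smu st) k' i - xvec R (xsel selX w t st k') i).
Proof.
move=> hs hk t st.
rewrite [useq w k' i s.+1]/useq -(mu_epoch w i hs hk) addnS /= -/t -/st.
by rewrite /step /= div_epoch // hk sZ0_epoch.
Qed.

Definition cj (oj : option 'I_n) (i : 'I_m) : R := if oj is Some j then c j i else 0.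

Definition dv (zz : 'I_m -> R) (mu : 'I_K -> 'I_m -> R) (j : 'I_n) : R :=
  \sum_(k' : 'I_K | (k <= k')%N) dec_cost c j (mu k') (selX 0 k' j (mu k'))
  + aobj N g k zz mu (selA 0 k zz mu).

Definition dvo (zz : 'I_m -> R) (mu : 'I_K -> 'I_m -> R) (oj : option 'I_n) : R :=
  if oj is Some j then dv zz mu j else 0.

Lemma tt_lt s : (s < N)%N -> (k * N + s < K * N)%N.
Proof.
move=> hs; apply: (@leq_trans (k.+1 * N)); first by rewrite mulSn addnC ltn_add2r.
by rewrite leq_mul2r kK orbT.
Qed.

Hypothesis hX : is_xsel c S selX.
Hypothesis hA : is_asel N g selA.

Lemma dec_min j mu t k' :
  dec_cost c j mu (selX t k' j mu) = dec_cost c j mu (selX 0 k' j mu).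
Proof.
have [h1 h2] := hX t k' j mu; have [h3 h4] := hX 0 k' j mu.
by apply/le_anti; rewrite h2 // h4.
Qed.

Lemma aobj_min zz mu t : (forall i, 0 <= zz i <= (k * N)%N%:R) ->
  aobj N g k zz mu (selA t k zz mu) = aobj N g k zz mu (selA 0 k zz mu).
Proof.
move=> hz.
have [h1 h2] := hA t mu hz; have [h3 h4] := hA 0 mu hz.
by apply/le_anti; rewrite h2 // h4.
Qed.

Section Path.
Variable w : {ffun 'I_(K * N) -> 'I_n}.

Definition zz0 := Zbefore eta mu1 selX selA w k.
Definition tt s := (k * N + s)%N.
Definition stt s := reset N mu1 (tt s) (runw w (tt s)).
Definition muu s := smu (stt s).
Definition aa s := selA (tt s) k zz0 (muu s).
Definition xx s k' := xsel selX w (tt s) (stt s) k'.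
Definition jo s := arrv w (tt s).

Definition Gz (a : 'I_K -> 'I_m -> R) : R :=
  \sum_(k' : 'I_K | (k <= k')%N)
     (k'.+1)%:R * \sum_(i < m)
        g k' i (zz0 i / (k'.+1 * N)%N%:R
                + \sum_(k'' : 'I_K | ((k <= k'') && (k'' <= k'))%N) a k'' i / (k'.+1)%:R).

Lemma z_bound i : 0 <= zz0 i <= (k * N)%N%:R.
Proof. exact: sU_bound. Qed.

Lemma aa_box s (k' : 'I_K) i : (k <= k')%N -> 0 <= aa s k' i <= 1.
Proof. by move=> hk; have [h _] := hA (tt s) (muu s) z_bound; apply: h. Qed.

Lemma dvo_eq s : (s < N)%N ->
  dvo zz0 (muu s) (jo s) =
    \sum_(k' : 'I_K | (k <= k')%N) \sum_(i < m) xvec R (xx s k') i * (cj (jo s) i - muu s k' i)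
    + Gz (aa s)
    + \sum_(k' : 'I_K | (k <= k')%N) \sum_(i < m) muu s k' i * aa s k' i.
Proof.
move=> hs; have [j hj] := arrv_some w (tt_lt hs).
rewrite /dvo /jo /tt hj /dv -(aobj_min _ (tt s)); last exact: z_bound.
rewrite /aobj /Gz /aa /tt addrA; congr (_ + _ + _).
apply: eq_bigr => k' _; rewrite -(dec_min _ _ (k * N + s)) /dec_cost.
by apply: eq_bigr => i _; rewrite /xx /xsel /tt hj.
Qed.

Definition C0 := \sum_(s < N) \sum_(k' : 'I_K | (k <= k')%N) \sum_(i < m) xvec R (xx s k') i * cj (jo s) i.
Definition GX := \sum_(k' : 'I_K | (k <= k')%N) \sum_(i < m)
        (k'.+1)%:R * g k' i ((zz0 i + Ztil eta mu1 selX selA w k k' i) / (k'.+1 * N)%N%:R).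

Lemma Vpi_eq : Vpi c g eta mu1 selX selA w k zz0 = C0 + N%:R * GX.
Proof.
rewrite /Vpi; congr (_ + _).
rewrite /ZtilJ.
under eq_bigr => j _ do under eq_bigr => i _ do rewrite epoch_sum.
rewrite /C0.
under [RHS]eq_bigr => s _ do under eq_bigr => k' _ do under eq_bigr => i _ do
  rewrite /cj -(sum_ind (fun j => c j i)) mulr_sumr.
rewrite exchange_big /=.
under eq_bigr => i _ do (under eq_bigr => j _ do rewrite mulr_sumr; rewrite exchange_big /=).
under eq_bigr => i _ do under eq_bigr => s _ do (under eq_bigr => j _ do rewrite mulr_sumr; rewrite exchange_big /=).
rewrite exchange_big /=; apply: eq_bigr => s _.
rewrite exchange_big /=; apply: eq_bigr => k' _.
apply: eq_bigr => i _; apply: eq_bigr => j _.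
by rewrite /xx /jo /tt /xt; ring.
Qed.

Lemma Ztil_eq (k' : 'I_K) i :
  Ztil eta mu1 selX selA w k k' i =
  \sum_(s < N) \sum_(k'' : 'I_K | ((k <= k'') && (k'' <= k'))%N) xvec R (xx s k'') i.
Proof.
rewrite /Ztil.
under eq_bigr => j _ do rewrite epoch_sum.
rewrite exchange_big /=; apply: eq_bigr => s _.
rewrite exchange_big /=; apply: eq_bigr => k'' _.
rewrite -mulr_sumr.
have [j hj] := arrv_some w (tt_lt (ltn_ord s)).
have := sum_ind (fun _ => (1:R)) (arrv w (k * N + s)).
rewrite hj => e.
rewrite (eq_bigr (fun j0 => 1 * (Some j == Some j0)%:R)); last by move=> j0 _; rewrite mul1r.
by rewrite e mulr1.
Qed.

Variable L : R.
Hypothesis L0 : 0 <= L.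
Hypothesis hLip : forall (k0 : 'I_K) (i : 'I_m) (x y : R), 0 <= x <= 1 -> 0 <= y <= 1 ->
     `|g k0 i x - g k0 i y| <= L * `|x - y|.
Hypothesis hcvx : forall (k0 : 'I_K) (i : 'I_m) (x y l : R), 0 <= x <= 1 -> 0 <= y <= 1 -> 0 <= l <= 1 ->
     g k0 i (l * x + (1 - l) * y) <= l * g k0 i x + (1 - l) * g k0 i y.

Definition ys (k' : 'I_K) (i : 'I_m) (s : nat) : R :=
  zz0 i / (k'.+1 * N)%N%:R
  + \sum_(k'' : 'I_K | ((k <= k'') && (k'' <= k'))%N) aa s k'' i / (k'.+1)%:R.

Definition Delta (k'' : 'I_K) (i : 'I_m) : R :=
  \sum_(s < N) (xvec R (xx s k'') i - aa s k'' i).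

Lemma Npos_R : 0 < N%:R :> R. Proof. by rewrite ltr0n. Qed.

Lemma ys01 (k' : 'I_K) i s : (k <= k')%N -> 0 <= ys k' i s <= 1.
Proof.
move=> hk.
have hk1 : 0 < (k'.+1)%:R :> R by rewrite ltr0n.
have hz := z_bound i.
have hc := @cnt_R R K (fun x => aa s x i) k k' (fun x hx => aa_box s i hx).
have h0 : 0 <= \sum_(k'' : 'I_K | ((k <= k'') && (k'' <= k'))%N) aa s k'' i.
  by apply: sumr_ge0 => x /andP[hx _]; case/andP: (aa_box s i hx).
rewrite /ys -mulr_suml.
rewrite natrM natrB ?(leqW hk) // in hc *.
rewrite natrM in hz.
have hN := Npos_R.
set A := \sum_(k'' : 'I_K | _) _ in hc h0 *.
apply/andP; split.
  by apply: addr_ge0; apply: divr_ge0 => //; [case/andP: hz | rewrite mulr_ge0 // ltW].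
have -> : zz0 i / ((k'.+1)%:R * N%:R) + A / (k'.+1)%:R = (zz0 i / N%:R + A) / (k'.+1)%:R.
  field; rewrite (lt0r_neq0 hN) andbT; apply: lt0r_neq0; by rewrite addrC natr1 ltr0n.
rewrite ler_pdivrMr // mul1r.
have : zz0 i / N%:R <= k%:R.
  by rewrite ler_pdivrMr //; case/andP: hz.
have : (k <= k')%N := hk.
move=> hk'; have hkR : k%:R <= (k'.+1)%:R :> R by rewrite ler_nat ltnW.
lra.
Qed.

Lemma yX01 (k' : 'I_K) i : (k <= k')%N ->
  0 <= (zz0 i + Ztil eta mu1 selX selA w k k' i) / (k'.+1 * N)%N%:R <= 1.
Proof.
move=> hk.
have hz := z_bound i.
have hX1 : 0 <= Ztil eta mu1 selX selA w k k' i <= N%:R * (k'.+1 - k)%:R.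
  rewrite Ztil_eq; apply/andP; split.
    apply: sumr_ge0 => s _; apply: sumr_ge0 => x _; by case/andP: (xvec01 (xx s x) i).
  apply: (@le_trans _ _ (\sum_(s < N) (k'.+1 - k)%:R)); last by rewrite sumr_const card_ord mulr_natl.
  apply: ler_sum => s _; apply: cnt_R => x _; exact: xvec01.
have hN := Npos_R.
have hk1 : 0 < (k'.+1)%:R :> R by rewrite ltr0n.
rewrite natrB ?(leqW hk) // in hX1.
rewrite natrM in hz; rewrite natrM.
have hkR : k%:R <= (k'.+1)%:R :> R by rewrite ler_nat ltnW.
have hp : 0 < (k'.+1)%:R * N%:R :> R by rewrite mulr_gt0.
apply/andP; split.
  by apply: divr_ge0; [move: hz hX1; lra | exact: ltW hp].
rewrite ler_pdivrMr // mul1r.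
move: hz hX1; nra.
Qed.

Lemma Delta_sum (k' : 'I_K) i :
  \sum_(k'' : 'I_K | ((k <= k'') && (k'' <= k'))%N) Delta k'' i
  = Ztil eta mu1 selX selA w k k' i
    - \sum_(s < N) \sum_(k'' : 'I_K | ((k <= k'') && (k'' <= k'))%N) aa s k'' i.
Proof.
rewrite Ztil_eq /Delta exchange_big /= -sumrB; apply: eq_bigr => s _.
by rewrite sumrB.
Qed.

Lemma P1 (k' : 'I_K) i : (k <= k')%N ->
  N%:R * ((k'.+1)%:R * g k' i ((zz0 i + Ztil eta mu1 selX selA w k k' i) / (k'.+1 * N)%N%:R))
  - (k'.+1)%:R * \sum_(s < N) g k' i (ys k' i s)
  <= L * \sum_(k'' : 'I_K | (k <= k'')%N) `|Delta k'' i|.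
Proof.
move=> hk.
set yX := (zz0 i + _) / _.
have hyX : 0 <= yX <= 1 by exact: yX01.
have hN := Npos_R.
have hk1 : 0 < (k'.+1)%:R :> R by rewrite ltr0n.
set yb := (\sum_(s < N) ys k' i s) / N%:R.
have hJ := @jensen R (g k' i) (hcvx k' i) N (ys k' i) (fun s _ => ys01 i s hk).
rewrite -/yb in hJ.
have hyb : 0 <= yb <= 1.
  rewrite /yb; apply/andP; split.
    by apply: divr_ge0 (ltW hN); apply: sumr_ge0 => s _; case/andP: (ys01 i s hk).
  rewrite ler_pdivrMr // mul1r.
  apply: (@le_trans _ _ (\sum_(s < N) (1:R))); last by rewrite sumr_const card_ord.
  by apply: ler_sum => s _; case/andP: (ys01 i s hk).
have hL := hLip k' i hyX hyb.
have eid : (k'.+1)%:R * N%:R * (yX - yb)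
         = \sum_(k'' : 'I_K | ((k <= k'') && (k'' <= k'))%N) Delta k'' i.
  rewrite Delta_sum /yX /yb /ys big_split /= sumr_const card_ord -mulr_natl.
  under [X in _ * (_ - (_ + X) / _)]eq_bigr => s _ do rewrite -mulr_suml.
  rewrite -mulr_suml natrM.
  field; rewrite (lt0r_neq0 hN) /=; apply: lt0r_neq0; by rewrite addrC natr1 ltr0n.
have hsub : `|\sum_(k'' : 'I_K | ((k <= k'') && (k'' <= k'))%N) Delta k'' i|
           <= \sum_(k'' : 'I_K | (k <= k'')%N) `|Delta k'' i|.
  apply: le_trans (ler_norm_sum _ _ _) _.
  rewrite [X in _ <= X](bigID (fun x : 'I_K => (x <= k')%N)) /= lerDl.
  by apply: sumr_ge0 => x _; exact: normr_ge0.
have a : (k'.+1)%:R * (N%:R * g k' i yb) <= (k'.+1)%:R * \sum_(s < N) g k' i (ys k' i s).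
  by rewrite ler_pM2l.
have b : N%:R * ((k'.+1)%:R * g k' i yX) - (k'.+1)%:R * (N%:R * g k' i yb)
         <= L * \sum_(k'' : 'I_K | (k <= k'')%N) `|Delta k'' i|.
  have -> : N%:R * ((k'.+1)%:R * g k' i yX) - (k'.+1)%:R * (N%:R * g k' i yb)
          = ((k'.+1)%:R * N%:R) * (g k' i yX - g k' i yb) by ring.
  have hp : 0 <= (k'.+1)%:R * N%:R :> R by rewrite mulr_ge0 // ltW.
  apply: (@le_trans _ _ (((k'.+1)%:R * N%:R) * (L * `|yX - yb|))).
    by apply: ler_wpM2l => //; apply: le_trans (ler_norm _) hL.
  have -> : (k'.+1)%:R * N%:R * (L * `|yX - yb|) = L * `|(k'.+1)%:R * N%:R * (yX - yb)|.
    by rewrite normrM (ger0_norm hp); ring.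
  by rewrite eid; apply: ler_wpM2l.
lra.
Qed.

Definition SD := \sum_(k'' : 'I_K | (k <= k'')%N) \sum_(i < m) `|Delta k'' i|.

Lemma sum_filter_le (F : 'I_K -> R) (P : pred 'I_K) :
  (forall x, 0 <= F x) -> \sum_(x | P x) F x <= \sum_x F x.
Proof.
move=> hF; rewrite [X in _ <= X](bigID P) /= lerDl.
by apply: sumr_ge0 => x _.
Qed.

Lemma boundI : N%:R * GX - \sum_(s < N) Gz (aa s) <= L * K%:R * SD.
Proof.
have e : \sum_(s < N) Gz (aa s)
       = \sum_(k' : 'I_K | (k <= k')%N) \sum_(i < m) (k'.+1)%:R * \sum_(s < N) g k' i (ys k' i s).
  rewrite /Gz exchange_big /=; apply: eq_bigr => k' _.
  rewrite -mulr_sumr exchange_big /= mulr_sumr; apply: eq_bigr => i _.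
  by rewrite /ys.
rewrite e /GX mulr_sumr -sumrB.
apply: (@le_trans _ _ (\sum_(k' : 'I_K | (k <= k')%N)
          \sum_(i < m) L * \sum_(k'' : 'I_K | (k <= k'')%N) `|Delta k'' i|)).
  apply: ler_sum => k' hk; rewrite mulr_sumr -sumrB; apply: ler_sum => i _.
  exact: P1.
set X := \sum_(i < m) L * _.
have hX0 : 0 <= X.
  by apply: sumr_ge0 => i _; apply: mulr_ge0 => //; apply: sumr_ge0 => x _.
apply: le_trans (@sum_filter_le (fun _ => X) (fun k' : 'I_K => (k <= k')%N) (fun _ => hX0)) _.
rewrite sumr_const card_ord -mulr_natl /X /SD -mulr_sumr exchange_big /=.
rewrite -[_ *+ K]mulr_natl mulr1 le_eqVlt; apply/orP; left; apply/eqP; ring.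
Qed.

Hypothesis eta0 : 0 < eta.

Definition M1 := \sum_(s < N) \sum_(k' : 'I_K | (k <= k')%N) \sum_(i < m) xvec R (xx s k') i * muu s k' i.
Definition M2 := \sum_(s < N) \sum_(k' : 'I_K | (k <= k')%N) \sum_(i < m) muu s k' i * aa s k' i.
Definition Bnd := \sum_(k' : 'I_K | (k <= k')%N) \sum_(i < m)
   ((mu1 k' i ^+ 2 + (L * K%:R) ^+ 2) / eta + eta * N%:R / 2).

Lemma coordII (k' : 'I_K) i : (k <= k')%N ->
  L * K%:R * `|Delta k' i| + \sum_(s < N) muu s k' i * (xvec R (xx s k') i - aa s k' i)
  <= (mu1 k' i ^+ 2 + (L * K%:R) ^+ 2) / eta + eta * N%:R / 2.
Proof.
move=> hk.
pose G s := aa s k' i - xvec R (xx s k') i.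
have hu : forall s, (s < N)%N -> useq w k' i s.+1 = useq w k' i s + eta * G s.
  by move=> s hs; rewrite (u_step w i hs hk).
have hG : forall s, (s < N)%N -> -1 <= G s <= 1.
  move=> s hs; rewrite /G; have := aa_box s i hk; have := xvec01 (xx s k') i; lra.
have hM : 0 <= L * K%:R by apply: mulr_ge0.
have := telesc_bound eta0 hM hu hG.
have -> : useq w k' i 0 = mu1 k' i by [].
have -> : `|Delta k' i| = `|\sum_(s < N) G s|.
  by rewrite /Delta /G -normrN -sumrN; congr `|_|; apply: eq_bigr => s _; rewrite opprB.
have -> : \sum_(s < N) muu s k' i * (xvec R (xx s k') i - aa s k' i)
        = - \sum_(s < N) useq w k' i s * G s.
  rewrite -sumrN; apply: eq_bigr => s _.
  by rewrite /muu /stt /tt (mu_epoch w i (ltn_ord s) hk) /G; ring.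
lra.
Qed.

Lemma boundII : L * K%:R * SD + M1 - M2 <= Bnd.
Proof.
have e0 : M1 - M2 = \sum_(s < N) \sum_(k' : 'I_K | (k <= k')%N) \sum_(i < m)
              (xvec R (xx s k') i * muu s k' i - muu s k' i * aa s k' i).
  rewrite /M1 /M2 -sumrB; apply: eq_bigr => s _; rewrite -sumrB; apply: eq_bigr => k' _.
  by rewrite -sumrB.
have e : M1 - M2 = \sum_(k' : 'I_K | (k <= k')%N) \sum_(i < m)
              \sum_(s < N) muu s k' i * (xvec R (xx s k') i - aa s k' i).
  rewrite e0 exchange_big /=; apply: eq_bigr => k' _; rewrite exchange_big /=.
  by apply: eq_bigr => i _; apply: eq_bigr => s _; ring.
rewrite -addrA e /SD mulr_sumr -big_split /=; apply: ler_sum => k' hk.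
rewrite mulr_sumr -big_split /=; apply: ler_sum => i _.
exact: coordII.
Qed.

Lemma sum_dvo : \sum_(s < N) dvo zz0 (muu s) (jo s) = C0 - M1 + \sum_(s < N) Gz (aa s) + M2.
Proof.
rewrite (eq_bigr _ (fun (s : 'I_N) _ => dvo_eq (ltn_ord s))).
rewrite !big_split /= /C0 /M1 /M2; congr (_ + _ + _).
rewrite -sumrB; apply: eq_bigr => s _; rewrite -sumrB; apply: eq_bigr => k' _.
by rewrite -sumrB; apply: eq_bigr => i _; ring.
Qed.

Lemma pathwise : Vpi c g eta mu1 selX selA w k zz0 <= \sum_(s < N) dvo zz0 (muu s) (jo s) + Bnd.
Proof. rewrite Vpi_eq sum_dvo; have := boundI; have := boundII; lra. Qed.

Definition LamR (j : 'I_n) : R := \sum_(s < N) (jo s == Some j)%:R.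

Lemma LamR_eq j : (Lam w k j)%:R = LamR j.
Proof. by rewrite /Lam natr_sum epoch_sum. Qed.

Lemma sum_LamR : \sum_(j < n) LamR j = N%:R.
Proof.
rewrite /LamR exchange_big /=.
rewrite -[in RHS](card_ord N) -sumr_const; apply: eq_bigr => s _.
have [j hj] := arrv_some w (tt_lt (ltn_ord s)).
have := sum_ind (fun _ => (1:R)) (jo s); rewrite /jo hj => e.
rewrite -[RHS]e; apply: eq_bigr => j0 _; by rewrite mul1r.
Qed.

Lemma xvec_None (i : 'I_m) : xvec R None i = 0.
Proof. by []. Qed.

Lemma dec_Some j mu (i : 'I_m) : dec_cost c j mu (Some i) = c j i - mu i.
Proof.
rewrite /dec_cost (bigD1 i) //= /xvec eqxx mul1r big1 ?addr0 // => i' hi.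
by rewrite (inj_eq (@Some_inj _)) eq_sym (negbTE hi) mul0r.
Qed.

Lemma dmin_le0 j mu (k' : 'I_K) : dec_cost c j mu (selX 0 k' j mu) <= 0.
Proof.
have [_ h] := hX 0 k' j mu.
apply: le_trans (h None isT) _.
by rewrite /dec_cost big1 // => i _; rewrite xvec_None mul0r.
Qed.

Lemma dmin_le j mu (k' : 'I_K) (i : 'I_m) : i \in S j -> dec_cost c j mu (selX 0 k' j mu) <= c j i - mu i.
Proof.
move=> hi; have [_ h] := hX 0 k' j mu.
by rewrite -dec_Some; apply: h.
Qed.

Lemma key_feas (zz : 'I_m -> R) (nu : 'I_K -> 'I_m -> R)
  (Z : {ffun 'I_K * 'I_n * 'I_m -> 'I_N.+1}) :
  (forall i, 0 <= zz i <= (k * N)%N%:R) -> off_feasible S w k Z ->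
  \sum_(s < N) dvo zz nu (jo s) <= offobj c g k zz Z.
Proof.
move=> hz hf.
pose Zv (k' : 'I_K) (j : 'I_n) (i : 'I_m) : R := ((Z (k', j, i) : nat)%:R : R).
have hZ0 : forall k' j i, 0 <= Zv k' j i by move=> *; rewrite /Zv ler0n.
have hfe : forall (k' : 'I_K) j, (k <= k')%N ->
    (forall i, i \notin S j -> Zv k' j i = 0) /\ \sum_(i < m) Zv k' j i <= LamR j.
  move=> k' j hk.
  move/forallP: hf => /(_ k') /implyP /(_ hk) /forallP /(_ j) /andP [/forallP h1 h2].
  split; first by move=> i hi; move/implyP: (h1 i) => /(_ hi) /eqP; rewrite /Zv => ->.
  by rewrite -LamR_eq /Zv -natr_sum ler_nat.
pose A (k' : 'I_K) (i : 'I_m) := \sum_(j < n) Zv k' j i.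
pose aZ (k' : 'I_K) (i : 'I_m) := A k' i / N%:R.
have hN := Npos_R.
have hbox : in_box k aZ.
  move=> k' i hk; rewrite /aZ; apply/andP; split.
    by apply: divr_ge0 (ltW hN); apply: sumr_ge0 => j _.
  rewrite ler_pdivrMr // mul1r -sum_LamR; apply: ler_sum => j _.
  have [_ h2] := hfe k' j hk; apply: le_trans h2.
  rewrite (bigD1 i) //= lerDl; by apply: sumr_ge0 => i' _.
have amin := (hA 0 nu hz).2 aZ hbox.
have xpart : forall (k' : 'I_K) j, (k <= k')%N ->
    LamR j * dec_cost c j (nu k') (selX 0 k' j (nu k'))
    <= \sum_(i < m) (c j i - nu k' i) * Zv k' j i.
  move=> k' j hk; have [h1 h2] := hfe k' j hk.
  set d := dec_cost _ _ _ _.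
  have hd0 : d <= 0 by exact: dmin_le0.
  apply: (@le_trans _ _ (d * \sum_(i < m) Zv k' j i)).
    by rewrite mulrC ler_wnM2l.
  rewrite mulr_sumr; apply: ler_sum => i _.
  case: (boolP (i \in S j)) => hi.
    by apply: ler_wpM2r; [exact: hZ0 | exact: dmin_le].
  by rewrite h1 // !mulr0.
have eL : \sum_(s < N) dvo zz nu (jo s)
   = \sum_(k' : 'I_K | (k <= k')%N) \sum_(j < n) LamR j * dec_cost c j (nu k') (selX 0 k' j (nu k'))
     + N%:R * aobj N g k zz nu (selA 0 k zz nu).
  transitivity (\sum_(s < N) (\sum_(k' : 'I_K | (k <= k')%N) \sum_(j < n)
      dec_cost c j (nu k') (selX 0 k' j (nu k')) * (jo s == Some j)%:R
      + aobj N g k zz nu (selA 0 k zz nu))).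
    apply: eq_bigr => s _; have [j hj] := arrv_some w (tt_lt (ltn_ord s)).
    rewrite /dvo /jo /tt hj /dv; congr (_ + _); apply: eq_bigr => k' _.
    by rewrite sum_ind.
  rewrite big_split /= sumr_const card_ord; congr (_ + _); last by rewrite mulr_natl.
  rewrite exchange_big /=; apply: eq_bigr => k' hk; rewrite exchange_big /=; apply: eq_bigr => j _.
  by rewrite /LamR mulr_suml; apply: eq_bigr => s _; rewrite mulrC.
have eR : offobj c g k zz Z
   = \sum_(k' : 'I_K | (k <= k')%N) \sum_(j < n) \sum_(i < m) (c j i - nu k' i) * Zv k' j i
     + N%:R * aobj N g k zz nu aZ.
  rewrite /offobj /aobj mulrDr /aZ /A /Zv.
  have e1 : \sum_(j < n) \sum_(i < m) c j i * \sum_(k' : 'I_K | (k <= k')%N) ((Z (k', j, i) : nat)%:R : R)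
     = \sum_(k' : 'I_K | (k <= k')%N) \sum_(j < n) \sum_(i < m) c j i * (Z (k', j, i) : nat)%:R.
    under eq_bigr => j _ do under eq_bigr => i _ do rewrite mulr_sumr.
    under eq_bigr => j _ do rewrite exchange_big /=.
    by rewrite exchange_big.
  have e2 : N%:R * \sum_(k' : 'I_K | (k <= k')%N) \sum_(i < m)
       nu k' i * ((\sum_(j < n) ((Z (k', j, i) : nat)%:R : R)) / N%:R)
     = \sum_(k' : 'I_K | (k <= k')%N) \sum_(j < n) \sum_(i < m) nu k' i * (Z (k', j, i) : nat)%:R.
    rewrite mulr_sumr; apply: eq_bigr => k' _; rewrite mulr_sumr exchange_big /=; apply: eq_bigr => i _.
    rewrite -mulr_sumr; field; exact: lt0r_neq0.
  have e4 : \sum_(k' : 'I_K | (k <= k')%N) \sum_(j < n) \sum_(i < m) (c j i - nu k' i) * ((Z (k', j, i) : nat)%:R : R)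
     = \sum_(k' : 'I_K | (k <= k')%N) \sum_(j < n) \sum_(i < m) c j i * (Z (k', j, i) : nat)%:R
       - \sum_(k' : 'I_K | (k <= k')%N) \sum_(j < n) \sum_(i < m) nu k' i * (Z (k', j, i) : nat)%:R.
    rewrite -sumrB; apply: eq_bigr => k' _; rewrite -sumrB; apply: eq_bigr => j _.
    by rewrite -sumrB; apply: eq_bigr => i _; ring.
  rewrite e1 e2 e4.
  have e3 : \sum_(k' : 'I_K | (k <= k')%N) \sum_(i < m) (k'.+1)%:R *
      g k' i ((zz i + \sum_(j < n) \sum_(k'' : 'I_K | ((k <= k'') && (k'' <= k'))%N)
                         ((Z (k'', j, i) : nat)%:R : R)) / (k'.+1 * N)%N%:R)
    = \sum_(k' : 'I_K | (k <= k')%N) (k'.+1)%:R * \sum_(i < m) g k' i (zz i / (k'.+1 * N)%N%:R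
        + \sum_(k'' : 'I_K | ((k <= k'') && (k'' <= k'))%N)
            (\sum_(j < n) ((Z (k'', j, i) : nat)%:R : R)) / N%:R / (k'.+1)%:R).
    apply: eq_bigr => k' _; rewrite mulr_sumr; apply: eq_bigr => i _; congr (_ * g k' i _).
    rewrite exchange_big /=.
    rewrite -mulr_suml -mulr_suml natrM.
    field; rewrite (lt0r_neq0 hN) andbT; apply: lt0r_neq0; by rewrite addrC natr1 ltr0n.
  rewrite e3; ring.
rewrite eL eR; apply: lerD.
  apply: ler_sum => k' hk; apply: ler_sum => j _; exact: xpart.
by rewrite ler_pM2l.
Qed.

Lemma weak_dual (zz : 'I_m -> R) (nu : 'I_K -> 'I_m -> R) :
  (forall i, 0 <= zz i <= (k * N)%N%:R) ->
  \sum_(s < N) dvo zz nu (jo s) <= Voff c S g w k zz.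
Proof.
move=> hz.
rewrite /Voff.
set LHS := \sum_(s < N) _.
have key : forall Z, off_feasible S w k Z -> LHS <= offobj c g k zz Z.
  by move=> Z hZ; apply: key_feas.
have feas0 : off_feasible S w k [ffun=> ord0].
  apply/forallP => k'; apply/implyP => _; apply/forallP => j; apply/andP; split.
    by apply/forallP => i; apply/implyP => _; rewrite ffunE.
  by rewrite big1 // => i _; rewrite ffunE.
apply: (big_ind (fun v => LHS <= v)); first exact: key.
  by move=> x y hx hy; rewrite le_min hx hy.
exact: key.
Qed.







End Path.

Lemma dec_lin j (o : option 'I_m) (mus : nat -> 'I_m -> R) :
  \sum_(s < N) dec_cost c j (mus s) o
  = N%:R * dec_cost c j (fun i => (\sum_(s < N) mus s i) / N%:R) o.
Proof.
rewrite /dec_cost exchange_big /= mulr_sumr; apply: eq_bigr => i _.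
rewrite -mulr_sumr sumrB sumr_const card_ord -mulr_natl.
field; apply: lt0r_neq0; exact: Npos_R.
Qed.

Lemma aobj_lin zz (mus : nat -> 'I_K -> 'I_m -> R) a :
  \sum_(s < N) aobj N g k zz (mus s) a
  = N%:R * aobj N g k zz (fun k' i => (\sum_(s < N) mus s k' i) / N%:R) a.
Proof.
rewrite /aobj big_split /= sumr_const card_ord mulrDr; congr (_ + _); first by rewrite mulr_natl.
rewrite exchange_big /= mulr_sumr; apply: eq_bigr => k' _.
rewrite exchange_big /= mulr_sumr; apply: eq_bigr => i _.
rewrite -mulr_suml; field; apply: lt0r_neq0; exact: Npos_R.
Qed.

Lemma dv_concave zz (mus : nat -> 'I_K -> 'I_m -> R) j :
  (forall i, 0 <= zz i <= (k * N)%N%:R) ->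
  \sum_(s < N) dv zz (mus s) j
  <= N%:R * dv zz (fun k' i => (\sum_(s < N) mus s k' i) / N%:R) j.
Proof.
move=> hz.
pose mb : 'I_K -> 'I_m -> R := fun k' i => (\sum_(s < N) mus s k' i) / N%:R.
change (\sum_(s < N) dv zz (mus s) j <= N%:R * dv zz mb j).
pose xs (k' : 'I_K) := selX 0 k' j (mb k').
pose as0 := selA 0 k zz mb.
apply: (@le_trans _ _ (\sum_(s < N) (\sum_(k' : 'I_K | (k <= k')%N) dec_cost c j (mus s k') (xs k')
                                     + aobj N g k zz (mus s) as0))).
  apply: ler_sum => s _; apply: lerD.
    apply: ler_sum => k' _; have [_ h] := hX 0 k' j (mus s k'); apply: h.
    by have [h' _] := hX 0 k' j (mb k').
  by have [_ h] := hA 0 (mus s) hz; apply: h; have [h' _] := hA 0 mb hz.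
rewrite big_split /= exchange_big /= /dv mulrDr aobj_lin; rewrite le_eqVlt; apply/orP; left; apply/eqP; congr (_ + _).
rewrite mulr_sumr; apply: eq_bigr => k' _.
by rewrite (dec_lin j (xs k') (fun s => mus s k')).
Qed.

Section Expect.
Variable p : 'I_n -> R.
Hypothesis p0 : forall j, 0 <= p j.
Hypothesis p1 : \sum_(j < n) p j = 1.
Variable L : R.
Hypothesis L0 : 0 <= L.
Hypothesis hLip : forall (k0 : 'I_K) (i : 'I_m) (x y : R), 0 <= x <= 1 -> 0 <= y <= 1 ->
     `|g k0 i x - g k0 i y| <= L * `|x - y|.
Hypothesis hcvx : forall (k0 : 'I_K) (i : 'I_m) (x y l : R), 0 <= x <= 1 -> 0 <= y <= 1 -> 0 <= l <= 1 ->
     g k0 i (l * x + (1 - l) * y) <= l * g k0 i x + (1 - l) * g k0 i y.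
Hypothesis eta0 : 0 < eta.

Definition ts (s : 'I_N) : 'I_(K * N) := Ordinal (tt_lt (ltn_ord s)).

Lemma arrv_upd (w : {ffun 'I_(K * N) -> 'I_n}) (t0 : 'I_(K * N)) (j : 'I_n) t : t != val t0 -> arrv (upd w t0 j) t = arrv w t.
Proof.
rewrite /arrv; case: insubP => [u _ hu|_] //= ht.
rewrite /upd ffunE; case: eqVneq => // e.
by move: ht; rewrite -hu e eqxx.
Qed.

Lemma run_upd (w : {ffun 'I_(K * N) -> 'I_n}) (t0 : 'I_(K * N)) (j : 'I_n) t : (t <= t0)%N ->
  runw (upd w t0 j) t = runw w t.
Proof.
move=> ht; apply: run_prefix => s hs; apply: arrv_upd.
by rewrite neq_ltn (leq_trans hs ht).
Qed.

Lemma zz0_upd (w : {ffun 'I_(K * N) -> 'I_n}) (t0 : 'I_(K * N)) (j : 'I_n) : (k * N <= t0)%N ->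
  zz0 (upd w t0 j) = zz0 w.
Proof. by move=> h; rewrite /zz0 /Zbefore run_upd. Qed.

Lemma muu_upd (w : {ffun 'I_(K * N) -> 'I_n}) (s : nat) (t0 : 'I_(K * N)) (j : 'I_n) : (k * N + s <= t0)%N ->
  muu (upd w t0 j) s = muu w s.
Proof. by move=> h; rewrite /muu /stt /tt run_upd. Qed.

Definition mb (w : {ffun 'I_(K * N) -> 'I_n}) : 'I_K -> 'I_m -> R :=
  fun k' i => (\sum_(s < N) muu w s k' i) / N%:R.

Definition agr (w w' : {ffun 'I_(K * N) -> 'I_n}) : bool :=
  [forall t : 'I_(K * N), (t < k * N)%N ==> (w t == w' t)].

Definition Phi (w w'' : {ffun 'I_(K * N) -> 'I_n}) : R :=
  \sum_(j < n) p j * dv (zz0 w) (mb w'') j.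

Definition Pmax (w w' : {ffun 'I_(K * N) -> 'I_n}) : bool :=
  agr w w' && [forall w'', agr w w'' ==> (Phi w w'' <= Phi w w')].

Lemma agr_refl w : agr w w.
Proof. by apply/forallP => t; apply/implyP => _. Qed.

Lemma exmax w : exists w', Pmax w w'.
Proof.
have [w' h1 h2] := @arg_maxP _ _ _ w (agr w) (Phi w) (agr_refl w).
exists w'; rewrite /Pmax h1 /=; apply/forallP => w''; apply/implyP => h.
exact: h2.
Qed.

Definition nustar w := mb (xchoose (exmax w)).

Lemma Pmax_upd (w : {ffun 'I_(K * N) -> 'I_n}) (t0 : 'I_(K * N)) (j : 'I_n) : (k * N <= t0)%N ->
  Pmax (upd w t0 j) =1 Pmax w.
Proof.
move=> h.
have ea : forall w'', agr (upd w t0 j) w'' = agr w w''.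
  move=> w''; apply: eq_forallb => t; rewrite /upd ffunE.
  case: (eqVneq t t0) => [e|//]; by rewrite e ltnNge h.
have eP : forall w'', Phi (upd w t0 j) w'' = Phi w w''.
  by move=> w''; rewrite /Phi zz0_upd.
move=> w'; rewrite /Pmax ea eP; congr (_ && _).
by apply: eq_forallb => w''; rewrite ea !eP.
Qed.

Lemma nustar_upd (w : {ffun 'I_(K * N) -> 'I_n}) (t0 : 'I_(K * N)) (j : 'I_n) : (k * N <= t0)%N ->
  nustar (upd w t0 j) = nustar w.
Proof. by move=> h; rewrite /nustar; congr mb; apply: eq_xchoose; apply: Pmax_upd. Qed.

Lemma nustar_max w : Phi w w <= Phi w (xchoose (exmax w)).
Proof.
have := xchooseP (exmax w); case/andP => _ /forallP /(_ w) /implyP.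
by apply; apply: agr_refl.
Qed.

Lemma exch_indep (F : 'I_N -> {ffun 'I_(K * N) -> 'I_n} -> 'I_n -> R) :
  (forall s w j j', F s (upd w (ts s) j') j = F s w j) ->
  \sum_(w : {ffun 'I_(K * N) -> 'I_n}) Pw p w * \sum_(s < N) F s w (w (ts s))
  = \sum_(w : {ffun 'I_(K * N) -> 'I_n}) Pw p w * \sum_(j < n) p j * \sum_(s < N) F s w j.
Proof.
move=> hF.
under eq_bigr => w _ do rewrite mulr_sumr.
rewrite exchange_big /=.
under eq_bigr => s _ do rewrite (indep p1 (hF s)).
rewrite exchange_big /=; apply: eq_bigr => w _.
rewrite -mulr_sumr; congr (_ * _).
rewrite exchange_big /=; apply: eq_bigr => j _.
by rewrite mulr_sumr.
Qed.

Lemma jo_ts w (s : 'I_N) : jo w s = Some (w (ts s)).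
Proof. exact: (arrv_ord w (ts s)). Qed.

Lemma exp_bound : exp_proxy_reg N c S g p eta mu1 selX selA k <= Bnd L.
Proof.
rewrite /exp_proxy_reg.
change (\sum_(w : {ffun 'I_(K * N) -> 'I_n}) Pw p w * proxy_reg c S g eta mu1 selX selA w k <= Bnd L).
have hP : forall w, 0 <= Pw p w := fun w => Pw_ge0 w p0.
pose D1 w := \sum_(s < N) dvo (zz0 w) (muu w s) (jo w s).
pose D2 w := \sum_(s < N) dvo (zz0 w) (nustar w) (jo w s).
have stepA : \sum_(w : {ffun 'I_(K * N) -> 'I_n}) Pw p w * proxy_reg c S g eta mu1 selX selA w k
     <= \sum_(w : {ffun 'I_(K * N) -> 'I_n}) Pw p w * (D1 w - Voff c S g w k (zz0 w)) + Bnd L.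
  rewrite -[X in _ <= _ + X]mul1r -(sumPw (K * N) p1) mulr_suml -big_split /=.
  apply: ler_sum => w _; rewrite -mulrDr; apply: ler_wpM2l; first exact: hP.
  have := pathwise w L0 hLip hcvx eta0; rewrite /proxy_reg /D1 -/(zz0 w); lra.
have stepC : \sum_(w : {ffun 'I_(K * N) -> 'I_n}) Pw p w * D2 w <= \sum_(w : {ffun 'I_(K * N) -> 'I_n}) Pw p w * Voff c S g w k (zz0 w).
  apply: ler_sum => w _; apply: ler_wpM2l; first exact: hP.
  rewrite /D2; exact: (weak_dual w (nustar w) (z_bound w)).
have L1 : \sum_(w : {ffun 'I_(K * N) -> 'I_n}) Pw p w * D1 w
        = \sum_(w : {ffun 'I_(K * N) -> 'I_n}) Pw p w * \sum_(j < n) p j * \sum_(s < N) dv (zz0 w) (muu w s) j.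
  rewrite -(exch_indep (F := fun s w j => dv (zz0 w) (muu w s) j)).
    apply: eq_bigr => w _; congr (_ * _); apply: eq_bigr => s _; by rewrite /dvo jo_ts.
  move=> s w j j'; rewrite zz0_upd ?muu_upd //= ?leq_addr //.
have L2 : \sum_(w : {ffun 'I_(K * N) -> 'I_n}) Pw p w * D2 w
        = \sum_(w : {ffun 'I_(K * N) -> 'I_n}) Pw p w * \sum_(j < n) p j * \sum_(s < N) dv (zz0 w) (nustar w) j.
  rewrite -(exch_indep (F := fun s w j => dv (zz0 w) (nustar w) j)).
    apply: eq_bigr => w _; congr (_ * _); apply: eq_bigr => s _; by rewrite /dvo jo_ts.
  move=> s w j j'; rewrite zz0_upd ?nustar_upd //= ?leq_addr //.
have stepB : \sum_(w : {ffun 'I_(K * N) -> 'I_n}) Pw p w * D1 w <= \sum_(w : {ffun 'I_(K * N) -> 'I_n}) Pw p w * D2 w.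
  rewrite L1 L2; apply: ler_sum => w _; apply: ler_wpM2l; first exact: hP.
  apply: (@le_trans _ _ (N%:R * Phi w w)).
    rewrite /Phi mulr_sumr; apply: ler_sum => j _.
    rewrite mulrCA; apply: ler_wpM2l; first exact: p0.
    exact: dv_concave (z_bound w).
  apply: (@le_trans _ _ (N%:R * Phi w (xchoose (exmax w)))).
    by apply: ler_wpM2l; [rewrite ler0n | exact: nustar_max].
  rewrite /Phi mulr_sumr; apply: ler_sum => j _.
  rewrite sumr_const card_ord -mulr_natl /nustar; lra.
have e : \sum_(w : {ffun 'I_(K * N) -> 'I_n}) Pw p w * (D1 w - Voff c S g w k (zz0 w))
       = \sum_(w : {ffun 'I_(K * N) -> 'I_n}) Pw p w * D1 w - \sum_(w : {ffun 'I_(K * N) -> 'I_n}) Pw p w * Voff c S g w k (zz0 w).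
  by rewrite -sumrB; apply: eq_bigr => w _; rewrite mulrBr.
move: stepA; rewrite e; lra.
Qed.

End Expect.

End Epoch.
End Dyn.

Lemma term_bound (R : realType) (a e q c1 c2 : R) :
  0 <= a -> 0 < q -> 0 < c1 -> c1 / q <= e -> e <= c2 / q ->
  a / e + e * (q ^+ 2) / 2 <= q * (a / c1 + c2 / 2).
Proof.
move=> ha hq hc1 h1 h2.
have he : 0 < e by apply: lt_le_trans h1; apply: divr_gt0.
have h1' : c1 <= q * e by move: h1; rewrite ler_pdivrMr // mulrC.
have h2' : e * q <= c2 by move: h2; rewrite ler_pdivlMr.
have A : a / e <= q * (a / c1).
  rewrite ler_pdivrMr //.
  have -> : q * (a / c1) * e = a * ((q * e) / c1) by field; apply: lt0r_neq0.
  rewrite -[X in X <= _]mulr1; apply: ler_wpM2l => //.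
  by rewrite ler_pdivlMr // mul1r.
have B : e * (q ^+ 2) / 2 <= q * (c2 / 2).
  have -> : e * (q ^+ 2) / 2 = q * ((e * q) / 2) by rewrite expr2; field.
  apply: ler_wpM2l; first exact: ltW.
  by rewrite ler_pM2r // invr_gt0 ltr0n.
rewrite mulrDr; exact: lerD.
Qed.

Lemma Bnd_bound (R : realType) m K N (e : R) (mu1 : 'I_K -> 'I_m -> R) k L (q c1 c2 : R) :
  0 < q -> q ^+ 2 = N%:R -> 0 < c1 -> c1 / q <= e -> e <= c2 / q ->
  Bnd N e mu1 k L <= (\sum_(k' : 'I_K) \sum_(i < m)
       ((mu1 k' i ^+ 2 + (L * K%:R) ^+ 2) / c1 + c2 / 2)) * q.
Proof.
move=> hq hqN hc1 h1 h2.
have hc2 : 0 <= c2.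
  have he : 0 < e by apply: lt_le_trans h1; apply: divr_gt0.
  have : 0 < c2 / q by apply: lt_le_trans h2.
  by rewrite pmulr_lgt0 ?invr_gt0 // => /ltW.
rewrite /Bnd mulr_suml.
have t0 : forall (k' : 'I_K) (i : 'I_m), 0 <= (mu1 k' i ^+ 2 + (L * K%:R) ^+ 2) / c1 + c2 / 2.
  move=> k' i; apply: addr_ge0; apply: divr_ge0 => //.
    by apply: addr_ge0; apply: sqr_ge0.
  exact: ltW.
apply: (@le_trans _ _ (\sum_(k' : 'I_K | (k <= k')%N) \sum_(i < m)
        ((mu1 k' i ^+ 2 + (L * K%:R) ^+ 2) / c1 + c2 / 2) * q)).
  apply: ler_sum => k' _; apply: ler_sum => i _.
  rewrite -hqN [X in _ <= X]mulrC; apply: term_bound => //.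
  by apply: addr_ge0; apply: sqr_ge0.
under eq_bigr => k' _ do rewrite -mulr_suml.
rewrite [X in _ <= X](bigID (fun k' : 'I_K => (k <= k')%N)) /= lerDl.
apply: sumr_ge0 => k' _; apply: mulr_ge0; last exact: ltW.
by apply: sumr_ge0 => i _.
Qed.

Unset Implicit Arguments.

Theorem lemma4 (R : realType) (m n K : nat)
  (c : 'I_n -> 'I_m -> R) (S : 'I_n -> {set 'I_m}) (p : 'I_n -> R)
  (rho : 'I_K -> 'I_m -> R) (g : 'I_K -> 'I_m -> R -> R) (L : R)
  (mu1 : 'I_K -> 'I_m -> R) (eta : nat -> R) (c1 c2 : R) (N1 : nat) :
  (0 < K)%N ->
  (forall j, 0 <= p j) -> \sum_(j < n) p j = 1 ->
  (forall k i, 0 <= rho k i <= 1) ->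
  (forall k i, g k i (rho k i) = 0) ->
  (forall k i x, 0 <= x <= 1 -> 0 <= g k i x) ->
  (forall k i x y, 0 <= x <= 1 -> 0 <= y <= 1 ->
     `|g k i x - g k i y| <= L * `|x - y|) ->
  (forall k i x y l, 0 <= x <= 1 -> 0 <= y <= 1 -> 0 <= l <= 1 ->
     g k i (l * x + (1 - l) * y) <= l * g k i x + (1 - l) * g k i y) ->
  (* stepsize eta_T = Theta(sqrt(K/T)), T = K * N *)
  0 < c1 -> c1 <= c2 ->
  (forall N, (N1 <= N)%N ->
     c1 * Num.sqrt (K%:R / (K * N)%N%:R) <= eta N <= c2 * Num.sqrt (K%:R / (K * N)%N%:R)) ->
  forall k : 'I_K,
  exists C : R, exists N0 : nat,
  forall N : nat, (N0 <= N)%N ->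
  forall (selX : nat -> 'I_K -> 'I_n -> ('I_m -> R) -> option 'I_m)
         (selA : nat -> nat -> ('I_m -> R) -> ('I_K -> 'I_m -> R) -> ('I_K -> 'I_m -> R)),
    is_xsel c S selX ->
    is_asel N g selA ->
    exp_proxy_reg N c S g p (eta N) mu1 selX selA k
      <= C * Num.sqrt ((K * N)%N%:R / K%:R).
Proof.
move=> K0 p0 p1 _ _ _ hLip hcvx hc1 hc12 heta k.
pose L' := Num.max L 0.
have L'0 : 0 <= L' by rewrite le_max lexx orbT.
have hLip' : forall (k0 : 'I_K) (i : 'I_m) (x y : R), 0 <= x <= 1 -> 0 <= y <= 1 ->
    `|g k0 i x - g k0 i y| <= L' * `|x - y|.
  move=> k0 i x y hx hy; apply: le_trans (hLip k0 i x y hx hy) _.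
  by apply: ler_wpM2r; [exact: normr_ge0 | rewrite le_max lexx].
exists (\sum_(k' : 'I_K) \sum_(i < m)
       ((mu1 k' i ^+ 2 + (L' * K%:R) ^+ 2) / c1 + c2 / 2)), (maxn N1 1).
move=> N hN selX selA hX hA.
have hN1 : (N1 <= N)%N by move: hN; rewrite geq_max => /andP[].
have Npos : (0 < N)%N by move: hN; rewrite geq_max => /andP[].
have [he1 he2] := andP (heta N hN1).
have hNR : 0 < N%:R :> R by rewrite ltr0n.
have hKR : 0 < K%:R :> R by rewrite ltr0n.
have e1 : K%:R / (K * N)%N%:R = (N%:R)^-1 :> R.
  by rewrite natrM; field; apply/andP; split; apply: lt0r_neq0.
have e2 : (K * N)%N%:R / K%:R = N%:R :> R.
  by rewrite natrM; field; apply: lt0r_neq0.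
rewrite e1 in he1 he2; rewrite e2.
set q := Num.sqrt (N%:R : R).
have hq : 0 < q by rewrite sqrtr_gt0.
have hqN : q ^+ 2 = N%:R by rewrite sqr_sqrtr // ltW.
rewrite sqrtrV ?(ltW hNR) // -/q in he1 he2.
have eta0 : 0 < eta N by apply: lt_le_trans he1; apply: divr_gt0.
apply: le_trans (exp_bound mu1 (ltn_ord k) Npos hX hA p0 p1 L'0 hLip' hcvx eta0) _.
by apply: Bnd_bound => //; rewrite -div1r mulrA mulr1.
Qed.
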